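(* Let $x\in X$ and let $\mathcal{Q}=\{P_\alpha(x),P_\beta(y)\}$ be a plaque chain of length $1$, so that $h_{\mathcal{Q}}(x)=y$. Then for all $n>0$, $$\mu_{n-1}(x)\le \mu_n(y)\cdot h_{\mathcal{Q}}'(x)\le\mu_{n+1}(x).$$
   Context: $M$ is a closed Riemannian manifold with a codimension-one $C^1$-foliation $\mathcal{F}$ with oriented normal bundle. Fix a finite regular foliation atlas of transversally orientation-preserving charts $\varphi_\alpha\colon U_\alpha\to(-1,1)^n\times(-1,1)$ with transverse coordinate spaces $X_\alpha=(-1,1)$, and $X$ their disjoint union; $P_\alpha(x)$ is the plaque of $U_\alpha$ with transverse coordinate $x$. The transition map $h_{\beta\alpha}$ sends $x$ to $y$ when $P_\alpha(x)\cap P_\beta(y)\neq\emptyset$. A plaque chain $\mathcal{P}$ of length $\|\mathcal{P}\|=k$ is a sequence $P_{\alpha_0}(x_0),\dots,P_{\alpha_k}(x_k)$ of plaques with consecutive ones intersecting; its holonomy $h_{\mathcal{P}}=h_{\alpha_k\alpha_{k-1}}\circ\cdots\circ h_{\alpha_1\alpha_0}$ has maximal connected open domain $D_{\mathcal{P}}\ni x_0$ where all partial compositions are defined; derivatives are positive. Define $\mu_0(x)=1$ and, for $n\ge1$, $\mu_n(x)=\sup\{h_{\mathcal{P}}'(x): x\in D_{\mathcal{P}},\ \|\mathcal{P}\|\le n\}$. *)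

(* Defs.v *)
From HB Require Import structures.
From mathcomp Require Import all_boot all_order all_algebra.
From mathcomp Require Import all_classical all_reals all_analysis.
Set Implicit Arguments. Unset Strict Implicit. Unset Printing Implicit Defensive.
Import Order.TTheory GRing.Theory Num.Theory.
Import numFieldNormedType.Exports.
Local Open Scope classical_set_scope.
Local Open Scope ring_scope.

(* Transverse data of a finite regular foliation atlas of a codimension-one
   C^1 foliation with transversally orientation-preserving charts.
   Charts are indexed by the finite type A; X_a = (-1,1).
   [hdom b a] is the set of x in X_a such that the plaque P_a(x) meets some
   plaque P_b(y) (regularity: y is then unique); [htr b a x] is that y,
   i.e. htr b a is the transition map h_{ba}. *)
Record holonomy_atlas (R : realType) (A : finType) := HolonomyAtlas {
  hdom : A -> A -> set R;
  htr  : A -> A -> R -> R;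
  hdom_sub  : forall a b, hdom b a `<=` [set x | -1 < x < 1];
  hdom_open : forall a b, open (hdom b a);
  hdom_self : forall a, hdom a a = [set x | -1 < x < 1];
  htr_self  : forall a x, hdom a a x -> htr a a x = x;
  htr_maps  : forall a b x, hdom b a x -> hdom a b (htr b a x);
  (* plaque intersection is symmetric: h_{ab} is the inverse of h_{ba} *)
  htr_inv   : forall a b x, hdom b a x -> htr a b (htr b a x) = x;
  htr_derivable : forall a b x, hdom b a x -> derivable (htr b a) x 1;
  htr_C1 : forall a b x, hdom b a x -> {for x, continuous (fun t => derive1 (htr b a) t)};
  htr_pos : forall a b x, hdom b a x -> 0 < derive1 (htr b a) x
}.

Section Chains.
Variables (R : realType) (A : finType) (F : holonomy_atlas R A).

(* A plaque chain P_{a0}(x0), P_{a1}(x1), ..., P_{ak}(xk) is encoded by its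
   first chart a0, the remaining charts s = [:: a1; ...; ak] and x0; the
   x_i are then determined by x_{i+1} = h_{a_{i+1} a_i}(x_i).
   [chain_def a s x] : all partial compositions are defined at x. *)
Fixpoint chain_def (a : A) (s : seq A) (x : R) : Prop :=
  match s with
  | [::] => -1 < x < 1
  | b :: s' => hdom F b a x /\ chain_def b s' (htr F b a x)
  end.

Fixpoint chain_hol (a : A) (s : seq A) (x : R) : R :=
  match s with
  | [::] => x
  | b :: s' => chain_hol b s' (htr F b a x)
  end.

Definition chain_dom (a : A) (s : seq A) (x0 : R) : set R :=
  connected_component (chain_def a s) x0.

Definition mu (n : nat) (a : A) (x : R) : \bar R :=
  if n is 0 then 1%E else
  ereal_sup [set (derive1 (chain_hol a s) x)%:E | s in
     [set s : seq A | exists x0, chain_def a s x0 /\ chain_dom a s x0 x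
                                 /\ (size s <= n)%N]].

End Chains.

(* Main.v *)
Require Import Defs.
From HB Require Import structures.
From mathcomp Require Import all_boot all_order all_algebra.
From mathcomp Require Import all_classical all_reals all_analysis.
Import Order.TTheory GRing.Theory Num.Theory.
Import numFieldNormedType.Exports.
Local Open Scope classical_set_scope.
Local Open Scope ring_scope.

Section Aux.
Variables (R : realType) (A : finType) (F : holonomy_atlas R A).

Lemma chain_derivable a s x : chain_def F a s x -> derivable (chain_hol F a s) x 1.
Proof.
elim: s a x => [|b s IH] a x /=.
  by move=> _; exact: derivable_id.
move=> [hx hs].
change (derivable (chain_hol F b s \o htr F b a) x 1).
apply/derivable1_diffP; apply: differentiable_comp.
  exact/derivable1_diffP/(htr_derivable hx).
exact/derivable1_diffP/IH.
Qed.

Lemma chain_cons_deriv a b s x : hdom F b a x -> chain_def F b s (htr F b a x) ->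
  derive1 (chain_hol F a (b :: s)) x =
  derive1 (chain_hol F b s) (htr F b a x) * derive1 (htr F b a) x.
Proof.
move=> hx hs.
change (derive1 (chain_hol F b s \o htr F b a) x =
  derive1 (chain_hol F b s) (htr F b a x) * derive1 (htr F b a) x).
apply: derive1_comp; [exact: htr_derivable | exact: chain_derivable].
Qed.

Lemma inv_deriv a b x : hdom F b a x ->
  derive1 (htr F a b) (htr F b a x) * derive1 (htr F b a) x = 1.
Proof.
move=> hx.
rewrite -derive1_comp; last 2 first.
- exact: htr_derivable.
- exact/htr_derivable/htr_maps.
have Hn : \forall t \near x, hdom F b a t.
  by apply: open_nbhs_nbhs; split => //; exact: hdom_open.
rewrite derive1E (@near_eq_derive _ _ _ _ id).
  by rewrite derive_id.
by near=> t; rewrite /= htr_inv //; near: t.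
Unshelve. all: by end_near.
Qed.

Lemma mu_ge n a s x : (0 < n)%N -> chain_def F a s x -> (size s <= n)%N ->
  ((derive1 (chain_hol F a s) x)%:E <= mu F n a x)%E.
Proof.
case: n => // n _ hs hn /=.
apply: ereal_sup_ubound; exists s => //; exists x; split => //; split => //.
exact: connected_component_refl.
Qed.

Lemma mu_le n a x M : (0 < n)%N ->
  (forall s, chain_def F a s x -> (size s <= n)%N ->
     ((derive1 (chain_hol F a s) x)%:E <= M)%E) ->
  (mu F n a x <= M)%E.
Proof.
case: n => // n _ H /=.
apply: ge_ereal_sup => _ [s [x0 [h0 [hd hn]]] <-].
apply: H => //.
exact: (connected_component_sub hd).
Qed.

End Aux.
Arguments chain_derivable {R A F a s x}.
Arguments chain_cons_deriv {R A F a b s x}.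
Arguments inv_deriv {R A F a b x}.
Arguments mu_ge {R A F n a s x}.
Arguments mu_le {R A F n a x M}.

Theorem lemma4p1 (R : realType) (A : finType) (F : holonomy_atlas R A)
  (a b : A) (x : R) :
  chain_def F a [:: b] x ->
  forall n : nat, (0 < n)%N ->
    (mu F n.-1 a x <= mu F n b (chain_hol F a [:: b] x)
                       * (derive1 (chain_hol F a [:: b]) x)%:E
     <= mu F n.+1 a x)%E.
Proof.
move=> [hx hy] n n0.
have hxI : -1 < x < 1 by exact: (hdom_sub hx).
set y := chain_hol F a [:: b] x.
have yE : y = htr F b a x by [].
have dE : derive1 (chain_hol F a [:: b]) x = derive1 (htr F b a) x by [].
rewrite dE.
have hp := htr_pos hx.
have hyb : hdom F a b y by rewrite yE; exact: htr_maps.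
apply/andP; split.
-
  have key : forall s, chain_def F a s x -> (size s <= n.-1)%N ->
      ((derive1 (chain_hol F a s) x)%:E <= mu F n b y * (derive1 (htr F b a) x)%:E)%E.
    move=> s hs hsz.
    have hc : chain_def F b (a :: s) y.
      by split => //; rewrite yE htr_inv.
    have hsz' : (size (a :: s) <= n)%N by rewrite /= -(prednK n0) ltnS.
    have := mu_ge n0 hc hsz'.
    rewrite chain_cons_deriv //; last by rewrite yE htr_inv.
    rewrite yE htr_inv // => H.
    rewrite -(mulr1 (derive1 (chain_hol F a s) x)) -(inv_deriv hx) mulrA EFinM.
    by rewrite lee_pmul2r ?lte_fin.
  case: n n0 key => // -[|m] _ key.
    have := key [::] hxI (leqnn _).
    by rewrite (_ : chain_hol F a [::] = id) // derive1E derive_id.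
  by apply: mu_le => // s hs hsz; exact: key.
- rewrite -lee_pdivlMr //; apply: mu_le => // s hs hsz.
  rewrite lee_pdivlMr // -EFinM.
  have hc : chain_def F a (b :: s) x by split.
  have := mu_ge (ltn0Sn n) hc; rewrite ltnS => /(_ hsz).
  by rewrite chain_cons_deriv.
Qed.
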